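(* Fix $p$ with $\tfrac{1}{2}<p<1$ and put $r=\dfrac{1-p}{p}$. Define the sequence $(a_k)_{k\ge 0}$ by $a_0=0$ and $a_k=(1-p)+p\,a_{k-1}^2$ for $k\geq 1$. Then $\lim_{k\to\infty}a_k=r$, and the limit \[ \lim_{k\to\infty}\frac{r-a_k}{(2\,r\,p)^k} \] exists and satisfies \[ 0<\lim_{k\to\infty}\frac{r-a_k}{(2\,r\,p)^k}=r\prod_{j=0}^{\infty}\frac{r+a_j}{2r}<1 . \]
   Context: Here $2rp=2(1-p)$. This recurrence arises in the study of random Galton–Watson binary tree heights. *)

(* Defs.v *)
From Stdlib Require Import Reals.
From Coquelicot Require Import Coquelicot.
Open Scope R_scope.

Fixpoint a_seq (p : R) (k : nat) : R :=
  match k with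
  | O => 0
  | S k' => (1 - p) + p * (a_seq p k') ^ 2
  end.

Fixpoint partial_prod (f : nat -> R) (n : nat) : R :=
  match n with
  | O => 1
  | S n' => partial_prod f n' * f n'
  end.

(* Main.v *)
Require Import Defs.
From Stdlib Require Import Reals Lra Lia.
From Coquelicot Require Import Coquelicot.
Open Scope R_scope.

Lemma r_props (p : R) : 1/2 < p -> p < 1 ->
  0 < (1-p)/p /\ (1-p)/p < 1 /\ 2 * ((1-p)/p) * p = 2*(1-p).
Proof.
  intros h1 h2. split; [|split].
  - apply Rdiv_lt_0_compat; lra.
  - apply (Rmult_lt_reg_r p); [lra|]. unfold Rdiv. rewrite Rmult_assoc, Rinv_l; lra.
  - field. lra.
Qed.

Lemma a_bounds (p : R) : 1/2 < p -> p < 1 -> forall k,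
  0 <= a_seq p k <= (1-p)/p.
Proof.
  intros h1 h2. destruct (r_props p h1 h2) as [hr [hr1 hq]].
  set (r := (1-p)/p) in *.
  assert (fix_r : (1-p) + p * r^2 = r) by (unfold r; field; lra).
  induction k as [|k IH]; simpl; [lra|].
  split.
  - assert (0 <= p * (a_seq p k * (a_seq p k * 1))).
    { apply Rmult_le_pos; [lra|]. rewrite Rmult_1_r. apply Rle_0_sqr. }
    lra.
  - rewrite <- fix_r. simpl.
    assert (a_seq p k * (a_seq p k * 1) <= r * (r*1)).
    { rewrite !Rmult_1_r. apply Rmult_le_compat; lra. }
    nra.
Qed.

Lemma e_ident (p : R) : 1/2 < p -> p < 1 -> forall k,
  let r := (1-p)/p in
  r - a_seq p k = r * (2*r*p)^k * partial_prod (fun j => (r + a_seq p j)/(2*r)) k.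
Proof.
  intros h1 h2 k r. destruct (r_props p h1 h2) as [hr [hr1 hq]]. fold r in hr, hr1, hq.
  assert (fix_r : (1-p) + p * r^2 = r) by (unfold r; field; lra).
  induction k as [|k IH]; simpl; [lra|].
  replace (r - (1 - p + p * (a_seq p k * (a_seq p k * 1))))
    with (p * (r + a_seq p k) * (r - a_seq p k)).
  2:{ simpl in fix_r. nra. }
  rewrite IH. field. lra.
Qed.

Theorem mainTheorem1 (p : R) (hp1 : 1/2 < p) (hp2 : p < 1) :
  let r := (1 - p) / p in
  is_lim_seq (a_seq p) r /\
  exists L P : R,
    is_lim_seq (fun k => (r - a_seq p k) / (2 * r * p) ^ k) L /\
    is_lim_seq (partial_prod (fun j => (r + a_seq p j) / (2 * r))) P /\
    L = r * P /\ 0 < L /\ L < 1.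
Proof.
  intros r.
  destruct (r_props p hp1 hp2) as [hr [hr1 hq]]. fold r in hr, hr1, hq.
  set (q := 2*r*p). assert (hq0 : 0 < q) by (unfold q; lra).
  assert (hq1 : q < 1) by (unfold q; lra).
  set (f := fun j => (r + a_seq p j) / (2 * r)).
  set (PP := partial_prod f).
  assert (hab := a_bounds p hp1 hp2). fold r in hab.
  assert (hf : forall j, 1/2 <= f j <= 1).
  { intro j. specialize (hab j).
    assert (f j * (2*r) = r + a_seq p j) by (unfold f; field; lra). nra. }
  assert (hPP : forall n, 0 < PP n <= 1).
  { induction n as [|n IH]; unfold PP; simpl; [lra|]. fold PP.
    specialize (hf n). split; [apply Rmult_lt_0_compat; lra|].
    replace 1 with (1*1) by ring. apply Rmult_le_compat; lra. }
  assert (hid : forall k, r - a_seq p k = r * q^k * PP k).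
  { intro k. apply (e_ident p hp1 hp2). }
  assert (hdec : forall n, PP (S n) <= PP n).
  { intro n. unfold PP; simpl; fold PP. specialize (hf n). specialize (hPP n).
    assert (PP n * f n <= PP n * 1) by (apply Rmult_le_compat_l; lra). lra. }
  assert (hqk : forall k, 0 < q^k <= 1).
  { induction k; simpl; [lra|]. split; [apply Rmult_lt_0_compat; lra|].
    replace 1 with (1*1) by ring. apply Rmult_le_compat; lra. }
  assert (hfl : forall j, 1 - q^j/2 <= f j).
  { intro j. assert (e := hid j). specialize (hPP j). specialize (hqk j).
    assert (r - a_seq p j <= r * q^j).
    { rewrite e. rewrite <- (Rmult_1_r (r * q^j)) at 2. apply Rmult_le_compat_l; [|lra].
      apply Rmult_le_pos; lra. }
    assert (f j * (2*r) = r + a_seq p j) by (unfold f; field; lra). nra. }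
  assert (K : forall n, 1 <= PP n * exp ((1 - q^n)/(1-q))).
  { induction n as [|n IH].
    - unfold PP; simpl. replace ((1-1)/(1-q)) with 0 by (field; lra). rewrite exp_0. lra.
    - unfold PP; simpl; fold PP.
      replace ((1 - q * q^n)/(1-q)) with ((1 - q^n)/(1-q) + q^n) by (field; lra).
      rewrite exp_plus.
      assert (E := exp_ineq1_le (q^n)). specialize (hfl n). specialize (hf n).
      specialize (hqk n).
      assert (1 <= f n * exp (q^n)).
      { apply Rle_trans with ((1 - q^n/2) * (1 + q^n)); [nra|].
        apply Rmult_le_compat; lra. }
      replace (PP n * f n * (exp ((1 - q ^ n) / (1 - q)) * exp (q ^ n)))
        with ((PP n * exp ((1 - q ^ n) / (1 - q))) * (f n * exp (q ^ n))) by ring.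
      apply Rle_trans with (1*1); [lra|]. apply Rmult_le_compat; lra. }
  set (C := exp (1/(1-q))). assert (hC : 0 < C) by apply exp_pos.
  assert (K2 : forall n, / C <= PP n).
  { intro n. specialize (K n). specialize (hPP n). specialize (hqk n).
    assert (exp ((1 - q^n)/(1-q)) <= C).
    { unfold C. left. apply exp_increasing. unfold Rdiv. apply Rmult_lt_compat_r.
      - apply Rinv_0_lt_compat; lra.
      - lra. }
    apply (Rmult_le_reg_r C); [lra|]. rewrite Rinv_l by lra. nra. }
  assert (hex : ex_finite_lim_seq PP) by (apply (ex_finite_lim_seq_decr _ (/C)); auto).
  destruct hex as [P HP].
  assert (hPl : /C <= P).
  { assert (Hc := is_lim_seq_const (/C)).
    assert (H := is_lim_seq_le _ _ _ _ K2 Hc HP). simpl in H. exact H. }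
  assert (hPu : P <= 1).
  { assert (Hc := is_lim_seq_const 1).
    assert (H := is_lim_seq_le _ _ _ _ (fun n => proj2 (hPP n)) HP Hc). simpl in H. exact H. }
  assert (hCi : 0 < /C) by (apply Rinv_0_lt_compat; lra).
  split.
  - assert (Hg : is_lim_seq (fun n => q^n) 0) by (apply is_lim_seq_geom; rewrite Rabs_pos_eq; lra).
    assert (H1 := is_lim_seq_mult' _ _ _ _ Hg HP).
    assert (H2 := is_lim_seq_scal_l _ r _ H1). simpl in H2.
    assert (H3 := is_lim_seq_minus' _ _ _ _ (is_lim_seq_const r) H2).
    replace (r - r * (0 * P)) with r in H3 by ring.
    eapply is_lim_seq_ext; [|exact H3]. intro n. simpl.
    rewrite <- Rmult_assoc, <- hid. ring.
  - exists (r * P), P. split; [|split; [exact HP|split; [reflexivity|split]]].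
    + assert (H2 := is_lim_seq_scal_l _ r _ HP). simpl in H2.
      eapply is_lim_seq_ext; [|exact H2]. intro n. simpl.
      rewrite hid. field. specialize (hqk n). lra.
    + apply Rmult_lt_0_compat; lra.
    + assert (r * P <= r * 1) by (apply Rmult_le_compat_l; lra). lra.
Qed.
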